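(* Let $p\colon X\to Y$ be an approximately invertible continuous surjection between (Tychonoff) spaces. If $X$ is a finite $C$-space, then so is $Y$.
   Context: A set is functionally open if it is a cozero set. $X$ is a finite $C$-space if for every sequence $\{\omega_n\}$ of finite covers of $X$ by functionally open sets there exist $k$ and finite families $\gamma_1,\dots,\gamma_k$ of pairwise disjoint functionally open sets such that each $\gamma_n$ refines $\omega_n$ and $\bigcup_{n=1}^k\gamma_n$ covers $X$. A map $p\colon X\to Y$ is approximately invertible if there exists a $C^*$-embedding $i\colon X\to Z$ into a space $Z$ such that for every collection $\mathcal W$ of open subsets of $Z$ refined by $\{i(p^{-1}(y)):y\in Y\}$, there is a continuous map $g\colon Y\to Z$ with $g\circ p$ $\mathcal W$-close to $i$, i.e. each set $\{g(p(x)),i(x)\}$, $x\in X$, is contained in some member of $\mathcal W$. *)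

(* Defs.v *)
From HB Require Import structures.
From mathcomp Require Import all_boot all_order all_algebra.
From mathcomp Require Import all_classical all_reals.
From mathcomp Require Import topology normedtype.
Import numFieldNormedType.Exports.
Set Implicit Arguments. Unset Strict Implicit. Unset Printing Implicit Defensive.
Import Order.TTheory GRing.Theory Num.Theory.
Local Open Scope classical_set_scope.
Local Open Scope ring_scope.

(* Real-valued functions take values in an arbitrary realType R
   (all realTypes are isomorphic, so this is the usual real line). *)

Definition completely_regular (R : realType) (T : topologicalType) : Prop :=
  forall (a : T) (B : set T), closed B -> ~ B a ->
    exists f : T -> R, continuous f /\ f a = 0 /\ (forall b, B b -> f b = 1).

Definition tychonoff_space (R : realType) (T : topologicalType) : Prop :=
  accessible_space T /\ completely_regular R T.

Definition functionally_open (R : realType) (T : topologicalType) (U : set T) : Prop :=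
  exists f : T -> R, continuous f /\ U = [set x | f x != 0].

Definition finite_C_space (R : realType) (X : topologicalType) : Prop :=
  forall omega : nat -> set (set X),
    (forall n, finite_set (omega n)) ->
    (forall n U, omega n U -> functionally_open R U) ->
    (forall n (x : X), exists U, omega n U /\ U x) ->
    exists (k : nat) (gamma : nat -> set (set X)),
      (forall n, (n < k)%N -> finite_set (gamma n)) /\
      (forall n U, (n < k)%N -> gamma n U -> functionally_open R U) /\
      (forall n U V, (n < k)%N -> gamma n U -> gamma n V -> U <> V ->
          U `&` V = set0) /\
      (forall n U, (n < k)%N -> gamma n U ->
          exists V, omega n V /\ U `<=` V) /\
      (forall x : X, exists n U, (n < k)%N /\ gamma n U /\ U x).

Definition top_embedding (X Z : topologicalType) (i : X -> Z) : Prop :=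
  continuous i /\ injective i /\
  (forall U : set X, open U -> exists V : set Z, open V /\ i @^-1` V = U).

Definition Cstar_embedding (R : realType) (X Z : topologicalType) (i : X -> Z) : Prop :=
  top_embedding i /\
  forall f : X -> R, continuous f -> (exists M : R, forall x, `|f x| <= M) ->
    exists g : Z -> R, continuous g /\ (exists M : R, forall z, `|g z| <= M) /\
      (forall x, g (i x) = f x).

Definition approximately_invertible (R : realType) (X Y : topologicalType)
    (p : X -> Y) : Prop :=
  exists (Z : topologicalType) (i : X -> Z),
    tychonoff_space R Z /\ Cstar_embedding R i /\
    forall W : set (set Z),
      (forall V, W V -> open V) ->
      (forall y : Y, exists V, W V /\ i @` (p @^-1` [set y]) `<=` V) ->
      exists g : Y -> Z, continuous g /\
        forall x : X, exists V, W V /\ V (g (p x)) /\ V (i x).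

(* Main.v *)
Require Import Defs.
From HB Require Import structures.
From mathcomp Require Import all_boot all_order all_algebra.
From mathcomp Require Import all_classical all_reals.
From mathcomp Require Import topology normedtype.
Import numFieldNormedType.Exports.
Set Implicit Arguments. Unset Strict Implicit. Unset Printing Implicit Defensive.
Import Order.TTheory GRing.Theory Num.Theory.
Local Open Scope classical_set_scope.
Local Open Scope ring_scope.

Fixpoint Inl {T} (x : T) (s : list T) : Prop :=
  match s with nil => False | a :: s => a = x \/ Inl x s end.

Lemma in_In (T : eqType) (s : seq T) x : x \in s <-> Inl x s.
Proof.
elim: s => [|a s IH] //=; rewrite in_cons; split.
- by case/orP => [/eqP ->|/IH]; [left|right].
- by case=> [->|/IH ->]; rewrite ?eqxx ?orbT.
Qed.

Lemma fin_list T (A : set T) : finite_set A -> exists s : list T, forall x, A x <-> Inl x s.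
Proof.
move=> fA; have [H _] := (@finite_seqP {classic T} A).
case: (H fA) => s hs; exists s => x; rewrite hs /=.
exact: (@in_In {classic T}).
Qed.

Section C.
Variables (R : realType) (T : topologicalType).
Implicit Types f g : T -> R.
Lemma cC (c : R) : continuous (fun _ : T => c).
Proof. by move=> x; apply: cvg_cst. Qed.
Lemma cD f g : continuous f -> continuous g -> continuous (fun x => f x + g x).
Proof. by move=> hf hg x; apply: cvgD; [apply hf|apply hg]. Qed.
Lemma cN f : continuous f -> continuous (fun x => - f x).
Proof. by move=> hf x; apply: cvgN; apply hf. Qed.
Lemma cM f g : continuous f -> continuous g -> continuous (fun x => f x * g x).
Proof. by move=> hf hg x; apply: cvgM; [apply hf|apply hg]. Qed.
Lemma cV f : continuous f -> (forall x, f x != 0) -> continuous (fun x => (f x)^-1).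
Proof. by move=> hf h x; apply: cvgV; [apply h|apply hf]. Qed.
Lemma cA f : continuous f -> continuous (fun x => `|f x|).
Proof. by move=> hf x; apply: cvg_norm; apply hf. Qed.
Lemma cMax f g : continuous f -> continuous g -> continuous (fun x => Num.max (f x) (g x)).
Proof. move=> hf hg x. exact: (@continuous_max R T f g x (hf x) (hg x)). Qed.
Lemma cMin f g : continuous f -> continuous g -> continuous (fun x => Num.min (f x) (g x)).
Proof. move=> hf hg x. exact: (@continuous_min R T f g x (hf x) (hg x)). Qed.
Lemma oGt f (c : R) : continuous f -> open [set x | c < f x].
Proof. move=> hf. apply: (@open_comp T R f [set y | c < y]); first by move=> ? _; apply hf. exact: open_gt. Qed.
End C.

Section ML.
Variables (R : realType).
Definition maxl {I} (s : list I) (F : I -> R) : R :=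
  foldr (fun i acc => Num.max (F i) acc) 0 s.

Lemma maxl_ge0 I (s : list I) F : 0 <= maxl s F.
Proof. elim: s => [|a s IH] //=; by rewrite le_max IH orbT. Qed.

Lemma maxl_ge I (s : list I) F i : Inl i s -> F i <= maxl s F.
Proof.
elim: s => [|a s IH] //= [->|h]; rewrite le_max ?lexx //.
by rewrite IH ?orbT.
Qed.

Lemma maxl_lt I (s : list I) F c : 0 < c -> (forall i, Inl i s -> F i < c) -> maxl s F < c.
Proof.
move=> c0; elim: s => [|a s IH] //= h.
by rewrite gt_max h /= ?IH //; [move=> i hi; apply: h; right|left].
Qed.

Lemma maxl_eq0 I (s : list I) F : (forall i, Inl i s -> F i = 0) -> maxl s F = 0.
Proof.
elim: s => [|a s IH] //= h.
by rewrite h ?IH ?maxxx //; [move=> i hi; apply: h; right|left].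
Qed.

Lemma maxl_att I (s : list I) F : 0 < maxl s F -> exists i, Inl i s /\ F i = maxl s F.
Proof.
elim: s => [|a s IH] //=; first by rewrite ltxx.
rewrite /maxl /= -/(maxl s F).
case: (leP (F a) (maxl s F)) => h.
- move=> /IH [i [hi e]]; by exists i; split => //; right.
- by move=> _; exists a; split => //; left.
Qed.

Lemma maxl_cont (T : topologicalType) I (s : list I) (F : I -> T -> R) :
  (forall i, continuous (F i)) -> continuous (fun z => maxl s (fun i => F i z)).
Proof.
move=> hF; elim: s => [|a s IH] /=; first by apply: cC.
exact: cMax.
Qed.
End ML.

From mathcomp Require Import lra.

Lemma chc X Y (P : X -> Y -> Prop) :
  (forall x, exists y, P x y) -> exists f, forall x, P x (f x).
Proof. by move/choice => [f hf]; exists f. Qed.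

Section G2.
Variable R : realType.

Lemma cComp (T U : topologicalType) (f : T -> U) (g : U -> R) :
  continuous f -> continuous g -> continuous (fun x => g (f x)).
Proof. move=> hf hg x; apply: continuous_comp; [apply: hf|apply: hg]. Qed.

Lemma oLt (T : topologicalType) (f : T -> R) (c : R) : continuous f -> open [set x | f x < c].
Proof. move=> hf. apply: (@open_comp T R f [set y | y < c]); first by move=> ? _; apply hf. exact: open_lt. Qed.

Lemma fo_gt (T : topologicalType) (a : T -> R) (c : R) :
  continuous a -> functionally_open R [set y | c < a y].
Proof.
move=> ha; exists (fun y => Num.max (a y - c) 0); split.
  by apply: cMax; [apply: cD => //; apply: cC|apply: cC].
apply/seteqP; split => y /=.
  by move=> h; rewrite gt_eqF // lt_max subr_gt0 h.
case: (ltP c (a y)) => // h; rewrite max_r ?eqxx //.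
by rewrite subr_le0.
Qed.

Lemma coz_bounded (T : topologicalType) (U : set T) :
  exists f : T -> R, continuous f /\ (forall x, 0 <= f x <= 1) /\
    (functionally_open R U -> forall x, U x <-> 0 < f x).
Proof.
case: (pselect (functionally_open R U)) => [[h [hc ->]]|hn]; last first.
  exists (fun _ => 0); split; first exact: cC.
  by split => // x; rewrite lexx ler01.
exists (fun x => Num.min `|h x| 1); split.
  by apply: cMin; [apply: cA|apply: cC].
split => [x|_ x /=].
  by rewrite le_min normr_ge0 ler01 /= ge_min lexx orbT.
by rewrite lt_min normr_gt0 ltr01 andbT.
Qed.
Lemma coz_fun (T : topologicalType) :
  exists u : set T -> T -> R, forall O, continuous (u O) /\
    (forall y, 0 <= u O y <= 1) /\ (functionally_open R O -> forall y, O y <-> 0 < u O y).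
Proof.
have := (@chc _ _ (fun (O : set T) (f : T -> R) => continuous f /\
    (forall y, 0 <= f y <= 1) /\ (functionally_open R O -> forall y, O y <-> 0 < f y))).
case. move=> O; exact: coz_bounded. by move=> f hf; exists f.
Qed.
End G2.

Unset Implicit Arguments.
Theorem corollary5p3 (R : realType) (X Y : topologicalType) (p : X -> Y) :
  tychonoff_space R X -> tychonoff_space R Y ->
  continuous p -> (forall y : Y, exists x : X, p x = y) ->
  approximately_invertible R p ->
  finite_C_space R X -> finite_C_space R Y.
Proof.
move=> _ _ pc psurj [Z [i [_ [[_ ext] Happ]]]] XC omega omfin omfo omcov.
have [u hu] := coz_fun R Y.
have [L hL] : exists L : nat -> list (set Y), forall m O, omega m O <-> Inl O (L m).
  apply: (@chc _ _ (fun m s => forall O, omega m O <-> Inl O s)) => m.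
  exact: fin_list.
pose M m y := maxl (L m) (fun O => u O y).
have Mpos : forall m y, 0 < M m y.
  move=> m y; have [O [hO Oy]] := omcov m y.
  have h1 := @maxl_ge R _ (L m) (fun O => u O y) O ((hL m O).1 hO).
  apply: (lt_le_trans _ h1) => /=.
  exact: ((hu O).2.2 (omfo m O hO) y).1 Oy.
have Mc : forall m, continuous (M m).
  by move=> m; apply: maxl_cont => O; exact: (hu O).1.
pose phi m O y := Num.min (u O y / M m y) 1.
have phic : forall m O, continuous (phi m O).
  move=> m O; apply: cMin; last exact: cC.
  apply: cM; first exact: (hu O).1.
  apply: cV; first exact: Mc.
  by move=> y; rewrite gt_eqF // Mpos.
have phi01 : forall m O y, 0 <= phi m O y <= 1.
  move=> m O y; rewrite le_min ler01 andbT ge_min lexx orbT andbT.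
  by rewrite divr_ge0 // ?(ltW (Mpos m y)) //; case/andP: ((hu O).2.1 y).
pose Os m O := [set y | 2^-1 < phi m O y].
pose c m := (fun O => p @^-1` Os m O) @` omega m.
have c1 : forall n, finite_set (c n).
  move=> n; exact: (finite_image _ (omfin n)).
have c2 : forall n V, c n V -> functionally_open R V.
  move=> n V [O hO <-].
  exact: (fo_gt _ (cComp pc (phic n O))).
have c3 : forall n x, exists V, c n V /\ V x.
  move=> n x.
  have [O [hO e]] := maxl_att (Mpos n (p x)).
  exists (p @^-1` Os n O); split; first by exists O => //; apply/(hL n O).
  rewrite /Os /phi /= e divff ?gt_eqF ?Mpos // ?minxx.
  by rewrite invf_lt1 // ltr1n.
have := XC c c1 c2 c3.
case=> k [gam [gfin [gfo [gdisj [gref gcov]]]]].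
have [v hv] := coz_fun R X.
have [K hK] : exists K : nat -> list (set X),
    forall m, (m < k)%N -> forall U, gam m U <-> Inl U (K m).
  apply: (@chc _ _ (fun m s => (m < k)%N -> forall U, gam m U <-> Inl U s)) => m.
  case: (ltnP m k) => hm.
    by have [s hs] := fin_list (gfin m hm); exists s.
  by exists nil.
have [lab hlab] : exists lab : nat -> set X -> set Y, forall m U, (m < k)%N -> gam m U ->
    omega m (lab m U) /\ U `<=` p @^-1` Os m (lab m U).
  apply: (@chc _ _ (fun m (f : set X -> set Y) => forall U, (m < k)%N -> gam m U ->
    omega m (f U) /\ U `<=` p @^-1` Os m (f U))) => m.
  apply: (@chc _ _ (fun (U : set X) (O : set Y) => (m < k)%N -> gam m U ->
    omega m O /\ U `<=` p @^-1` Os m O)) => U.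
  case: (pselect ((m < k)%N /\ gam m U)) => [[hm hU]|hn].
    have [V [[O hO <-] UV]] := gref m U hm hU.
    by exists O.
  by exists set0 => hm hU; exfalso; apply: hn.
have [VZ hVZ] : exists VZ : set X -> Z -> R, forall U,
    continuous (VZ U) /\ forall x, VZ U (i x) = v U x.
  apply: (@chc _ _ (fun (U : set X) (G : Z -> R) =>
    continuous G /\ forall x, G (i x) = v U x)) => U.
  have [|G [Gc [_ GE]]] := ext (v U) (hv U).1.
    exists 1 => x; have /andP[h0 h1] := (hv U).2.1 x.
    by rewrite ger0_norm.
  by exists G.
have [PZ hPZ] : exists PZ : nat -> set Y -> Z -> R, forall m O,
    continuous (PZ m O) /\ forall x, PZ m O (i x) = phi m O (p x).
  apply: (@chc _ _ (fun m (F : set Y -> Z -> R) => forall O,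
    continuous (F O) /\ forall x, F O (i x) = phi m O (p x))) => m.
  apply: (@chc _ _ (fun (O : set Y) (G : Z -> R) =>
    continuous G /\ forall x, G (i x) = phi m O (p x))) => O.
  have [|G [Gc [_ GE]]] := ext (fun x => phi m O (p x)) (cComp pc (phic m O)).
    exists 1 => x; have /andP[h0 h1] := phi01 m O (p x).
    by rewrite ger0_norm.
  by exists G.
pose Q m U z := maxl (K m) (fun U' => if `[< U' = U >] then 0 else `|VZ U' z|).
pose a m U z := Num.min (`|VZ U z| - Q m U z) (PZ m (lab m U) z - 2^-1).
have ac : forall m U, continuous (a m U).
  move=> m U; apply: cMin.
    apply: cD; first exact: cA (hVZ U).1.
    apply: cN; apply: maxl_cont => U'.
    by case: (`[< U' = U >]); [apply: cC|apply: cA; apply: (hVZ U').1].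
  by apply: cD; [apply: (hPZ _ _).1|apply: cC].
pose A m U := [set z | 0 < a m U z].
pose G := [set z | exists m U, (m < k)%N /\ Inl U (K m) /\ A m U z].
pose dist (y' : Y) z := maxl (iota 0 k)
  (fun m => maxl (L m) (fun O => `|PZ m O z - phi m O y'|)).
pose B y' := [set z | dist y' z < 8^-1].
pose W := [set V | exists y', V = G `&` B y'].
have Gopen : open G.
  rewrite openE => z [m [U [hm [hU hz]]]].
  rewrite /interior.
  apply: (@filterS _ _ _ (A m U)).
    by move=> w hw; exists m, U.
  apply: open_nbhs_nbhs; split => //.
  exact: oGt (ac m U).
have distc : forall y', continuous (dist y').
  move=> y'; apply: maxl_cont => m; apply: maxl_cont => O.
  by apply: cA; apply: cD; [apply: (hPZ _ _).1|apply: cC].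
have Bopen : forall y', open (B y').
  by move=> y'; apply: oLt.
have hW1 : forall V, W V -> open V.
  by move=> V [y' ->]; apply: openI.
have hW2 : forall y' : Y, exists V, W V /\ i @` (p @^-1` [set y']) `<=` V.
  move=> y'; exists (G `&` B y'); split; first by exists y'.
  move=> _ [x hx <-]; split.
    have [n [U [hn [hU Ux]]]] := gcov x.
    exists n, U; split => //; split; first exact: (hK n hn U).1.
    rewrite /A /a /= lt_min; apply/andP; split.
      rewrite (_ : Q n U (i x) = 0) ?subr0; last first.
        apply: maxl_eq0 => U' hU'.
        case: asboolP => // ne.
        rewrite (hVZ U').2.
        have gU' := (hK n hn U').2 hU'.
        have nU' : ~ U' x.
          move=> U'x.
          have := gdisj n U U' hn hU gU' (fun e => ne (esym e)).
          by move/seteqP => [+ _] => /(_ x) /=; apply.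
        have /andP[h0 _] := (hv U').2.1 x.
        have : ~ (0 < v U' x) by move/((hv U').2.2 (gfo n U' hn gU') x).
        move=> hn'; have -> : v U' x = 0.
          by apply/eqP; rewrite eq_le h0 andbT leNgt; apply/negP.
        by rewrite normr0.
      rewrite (hVZ U).2 normr_gt0 gt_eqF //.
      exact: ((hv U).2.2 (gfo n U hn hU) x).1.
    rewrite (hPZ _ _).2 subr_gt0.
    exact: ((hlab n U hn hU).2 x Ux).
  rewrite /B /dist /= maxl_eq0 ?invr_gt0 ?ltr0n //.
  move=> m _; apply: maxl_eq0 => O _.
  by rewrite (hPZ m O).2 hx subrr normr0.
have [g [gc gW]] := Happ W hW1 hW2.
have distb : forall y' z m O, (m < k)%N -> omega m O -> dist y' z < 8^-1 ->
    `|PZ m O z - phi m O y'| < 8^-1.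
  move=> y' z m O hm hO hd; apply: le_lt_trans hd.
  apply: le_trans (maxl_ge _ ((in_In (iota 0 k) m).1 _)); last by rewrite mem_iota.
  exact: (maxl_ge _ ((hL m O).1 hO)).
exists k, (fun m => (fun U => g @^-1` A m U) @` gam m); split; [|split; [|split; [|split]]].
- by move=> n hn; apply: finite_image; apply: gfin.
- move=> n V hn [U hU <-].
  exact: (fo_gt _ (cComp gc (ac n U))).
- move=> n V1 V2 hn [U1 h1 <-] [U2 h2 <-] ne.
  have neU : U1 <> U2 by move=> e; apply: ne; rewrite e.
  apply/seteqP; split => y //= [y1 y2].
  have q12 : `|VZ U2 (g y)| <= Q n U1 (g y).
    apply: le_trans (maxl_ge _ ((hK n hn U2).1 h2)).
    by rewrite asboolF // => e; apply: neU.
  have q21 : `|VZ U1 (g y)| <= Q n U2 (g y).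
    apply: le_trans (maxl_ge _ ((hK n hn U1).1 h1)).
    by rewrite asboolF.
  move: y1 y2; rewrite /A /a /= !lt_min => /andP[+ _] /andP[+ _].
  rewrite !subr_gt0 => r1 r2.
  have := lt_le_trans r1 q21; have := lt_le_trans r2 q12.
  by move=> /lt_trans h /h; rewrite ltxx.
- move=> n V hn [U hU <-].
  have [hO sub] := hlab n U hn hU.
  exists (lab n U); split => // y hy.
  have [x px] := psurj y.
  have [_ [[y' ->] [[_ Bg] [_ Bi]]]] := gW x.
  rewrite px in Bg.
  have d1 := distb _ _ _ _ hn hO Bg.
  have d2 := distb _ _ _ _ hn hO Bi.
  rewrite (hPZ n _).2 px in d2.
  move: hy; rewrite /A /a /= lt_min => /andP[_ hy].
  have hphi : 0 < phi n (lab n U) y.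
    move: d1 d2 hy; rewrite !ltr_norml => /andP[d1 d1'] /andP[d2 d2'] hy.
    lra.
  move: hphi; rewrite /phi lt_min => /andP[hq _].
  apply/((hu _).2.2 (omfo n _ hO) y).
  have hM := Mpos n y.
  have -> : u (lab n U) y = u (lab n U) y / M n y * M n y.
    by rewrite divfK // gt_eqF.
  exact: mulr_gt0.
- move=> y; have [x px] := psurj y.
  have [_ [[y' ->] [[Gg _] _]]] := gW x.
  have [m [U [hm [hU hA]]]] := Gg.
  exists m, (g @^-1` A m U); split => //; split.
    by exists U => //; apply/(hK m hm U).
  by rewrite -px.
Qed.
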